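(* In the variation of the temporal graph discovery game in which the Discoverer does not learn the static edge set, there is an algorithm that wins the game on any temporal graph with node set $V$ and lifetime $T_{\max}$ in $|V|\,T_{\max}$ rounds.
   Context: A temporal graph $\mathcal G=(V,E,\lambda)$ with lifetime $T_{\max}$ consists of a finite undirected static graph $(V,E)$ and a labeling $\lambda:E\to\{1,\dots,T_{\max}\}$; edge $e$ is present only at time $\lambda(e)$. Infection model with parameter $\delta\in\mathbb N^+$: given seed infections $S\subseteq V\times[0,T_{\max}]$ (at most $k$ per round), a seed $(u,t)$ makes $u$ infected at time $t$; otherwise a susceptible node $u$ becomes infected at time $t$ iff some neighbour $v$ infectious at time $t$ has $\lambda(uv)=t$ (exactly one infector recorded if several exist). A node infected at time $t$ is infectious at times $t+1,\dots,t+\delta$ and resistant afterwards. The infection log records triples $(u,v,t)$ ($u$ infected $v$ at time $t$). Game (unknown static graph variant): the Discoverer knows only $V$; each round it submits seeds and the Adversary answers with an infection log consistent with the seeds under some temporal graph on $V$ consistent with all previous answers. The Discoverer wins iff the temporal graph (edges and labels) it finally submits equals the Adversary's final temporal graph consistent with all logs. *)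

(* Defs.v *)
From mathcomp Require Import all_boot.
Set Implicit Arguments. Unset Strict Implicit. Unset Printing Implicit Defensive.

Notation time Tmax := 'I_(Tmax.+1).

(* A temporal graph on V with lifetime Tmax is represented canonically as a
   finite function on ordered pairs: g (u,v) = Some t iff uv is an edge with
   label t; it must be symmetric, loopless, and labels lie in {1..Tmax}.
   With this canonical representation, equality of temporal graphs
   (edges and labels) is Leibniz equality. *)
Definition tgraph (V : finType) (Tmax : nat) := {ffun V * V -> option (time Tmax)}.

Definition valid_tgraph (V : finType) (Tmax : nat) (g : tgraph V Tmax) : Prop :=
  (forall u v, g (u, v) = g (v, u)) /\
  (forall u, g (u, u) = None) /\
  (forall u v (t : time Tmax), g (u, v) = Some t -> 0 < t).

Definition seeds (V : finType) (Tmax : nat) := {set V * time Tmax}.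
Definition ilog (V : finType) (Tmax : nat) := {set V * V * time Tmax}.

(* I v = Some s : v got infected at time s; None : never infected. *)
Definition infectious (V : finType) (Tmax delta : nat)
    (I : V -> option (time Tmax)) (u : V) (t : time Tmax) : Prop :=
  exists s : time Tmax, I u = Some s /\ s < t /\ t <= s + delta.

(* v would become infected at time t if it were susceptible at time t *)
Definition triggered (V : finType) (Tmax delta : nat) (g : tgraph V Tmax)
    (S : seeds V Tmax) (I : V -> option (time Tmax)) (v : V) (t : time Tmax) : Prop :=
  (v, t) \in S \/ exists u, infectious delta I u t /\ g (u, v) = Some t.

Definition infection_run (V : finType) (Tmax delta : nat) (g : tgraph V Tmax)
    (S : seeds V Tmax) (I : V -> option (time Tmax)) : Prop :=
  forall v, match I v with
    | Some t => triggered delta g S I v t /\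
                (forall t' : time Tmax, t' < t -> ~ triggered delta g S I v t')
    | None => forall t : time Tmax, ~ triggered delta g S I v t
    end.

Definition valid_log (V : finType) (Tmax delta : nat) (g : tgraph V Tmax)
    (S : seeds V Tmax) (L : ilog V Tmax) : Prop :=
  exists I, infection_run delta g S I /\
    (forall u v t, (u, v, t) \in L ->
        [/\ I v = Some t, (v, t) \notin S, infectious delta I u t & g (u, v) = Some t]) /\
    (forall v t, I v = Some t -> (v, t) \notin S -> exists! u, (u, v, t) \in L).

(* A history is the chronological list of rounds (seeds submitted, log received). *)
Definition history (V : finType) (Tmax : nat) := seq (seeds V Tmax * ilog V Tmax).

Definition consistent (V : finType) (Tmax delta : nat) (g : tgraph V Tmax)
    (h : history V Tmax) : Prop :=
  valid_tgraph g /\ (forall r, r \in h -> valid_log delta g r.1 r.2).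

(* h is a possible play of the Discoverer strategy st against some Adversary:
   in round i the seeds are st applied to the earlier rounds, and the answer
   is consistent (together with all previous answers) with some temporal graph. *)
Definition play_of (V : finType) (Tmax delta : nat)
    (st : history V Tmax -> seeds V Tmax) (h : history V Tmax) : Prop :=
  forall i, i < size h ->
    (nth (set0, set0) h i).1 = st (take i h) /\
    exists g : tgraph V Tmax, consistent delta g (take i.+1 h).

(* Main.v *)
Require Import Defs.
From mathcomp Require Import all_boot.
From Stdlib Require Import ClassicalEpsilon.
From mathcomp Require Import zify.
Set Implicit Arguments. Unset Strict Implicit.

Lemma run_min (V : finType) (Tmax delta : nat) (g : tgraph V Tmax) (v : V)
  (s : time Tmax) (I : V -> option (time Tmax)) :
  infection_run delta g [set (v, s)] I ->
  forall x (s' : time Tmax), I x = Some s' -> s <= s'.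
Proof.
move=> run.
have H : forall n x (s' : time Tmax), s' <= n -> I x = Some s' -> s <= s'.
  elim=> [|n IH] x s' hs' hI;
  (have := run x; rewrite hI => -[[hS|[y [[s'' [hy [lt _]]] _]]] _];
   [by move/set1P: hS => [_ ->] | ]).
  - lia.
  - have := IH y s''; rewrite hy => /(_ _ erefl). move=> h.
    have : s <= s'' by apply: h; lia.
    lia.
by move=> x s'; apply: H.
Qed.

Lemma run_eq (V : finType) (Tmax delta : nat) (g : tgraph V Tmax) (v : V)
  (s : time Tmax) (I : V -> option (time Tmax)) :
  infection_run delta g [set (v, s)] I ->
  forall x (s' : time Tmax), I x = Some s' -> nat_of_ord s' = nat_of_ord s -> x = v.
Proof.
move=> run x s' hI e.
have := run x; rewrite hI => -[[hS|[y [[s'' [hy [lt _]]] _]]] _].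
  by move/set1P: hS => [->].
have := run_min run hy => h; exfalso. lia.
Qed.

Lemma run_src (V : finType) (Tmax delta : nat) (g : tgraph V Tmax) (v : V)
  (s : time Tmax) (I : V -> option (time Tmax)) :
  infection_run delta g [set (v, s)] I -> I v = Some s.
Proof.
move=> run; have := run v; case e: (I v) => [t0|].
  move=> [_ hmin]; have h1 := run_min run e.
  case: (ltnP s t0) => h2.
    by case: (hmin s h2); left; apply/set1P.
  by congr Some; apply: val_inj => /=; lia.
by move=> h; case: (h s); left; apply/set1P.
Qed.

Lemma round_lemma (V : finType) (Tmax delta : nat) (g : tgraph V Tmax) (v u : V)
  (s t : time Tmax) (L : ilog V Tmax) :
  0 < delta -> valid_tgraph g -> valid_log delta g [set (v, s)] L ->
  nat_of_ord t = (nat_of_ord s).+1 -> g (v, u) = Some t -> (v, u, t) \in L.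
Proof.
move=> dp [_ [loop _]] [I [run [logok logex]]] et guv.
have Iv := run_src run.
have uv : u != v.
  by apply/eqP => e; rewrite e loop in guv.
have Iu : I u = Some t.
  have trig : triggered delta g [set (v, s)] I u t.
    right; exists v; split=> //; exists s; split=> //; lia.
  have := run u; case e: (I u) => [t0|]; last by move=> h; case: (h t).
  move=> [_ hmin].
  have h1 := run_min run e.
  case: (ltnP t0 t) => h2.
    have es : nat_of_ord t0 = nat_of_ord s by lia.
    by move: uv; rewrite (run_eq run e es) eqxx.
  case: (ltnP t t0) => h3; first by case: (hmin t h3).
  by congr Some; apply: val_inj => /=; lia.
have nS : (u, t) \notin [set (v, s)].
  by apply/set1P => -[e _]; move: uv; rewrite e eqxx.
have [w [hw _]] := logex u t Iu nS.
have [_ _ [s'' [hw' [lt _]]] _] := logok _ _ _ hw.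
have h1 := run_min run hw'.
have es : nat_of_ord s'' = nat_of_ord s by lia.
by rewrite -(run_eq run hw' es).
Qed.

Definition allR (V : finType) (Tmax : nat) : seq (V * time Tmax) :=
  [seq (v, widen_ord (leqnSn Tmax) s) | v <- enum V, s <- enum 'I_Tmax].

Definition stratD (V : finType) (Tmax : nat) (h : history V Tmax) : seeds V Tmax :=
  if ohead (drop (size h) (allR V Tmax)) is Some p then [set p] else set0.

Lemma transfer (V : finType) (Tmax delta : nat) (h : history V Tmax)
  (g1 g2 : tgraph V Tmax) :
  0 < delta -> size h = #|V| * Tmax -> play_of delta (@stratD V Tmax) h ->
  consistent delta g1 h -> consistent delta g2 h ->
  forall v u t, g1 (v, u) = Some t -> g2 (v, u) = Some t.
Proof.
move=> dp sh pl [v1 c1] [v2 c2] v u t guv.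
have tp : 0 < t by case: v1 => _ [_ h3]; exact: h3 guv.
have tlt : t.-1 < Tmax by have := ltn_ord t; lia.
set s := widen_ord (leqnSn Tmax) (Ordinal tlt).
set p := (v, s).
have pR : p \in allR V Tmax.
  apply/allpairsP; exists (v, Ordinal tlt) => /=; split => //.
  - by rewrite mem_enum.
  - by rewrite mem_enum.
have szR : size (allR V Tmax) = #|V| * Tmax.
  by rewrite size_allpairs size_enum_ord cardE.
set i := index p (allR V Tmax).
have iR : i < size (allR V Tmax) by rewrite index_mem.
have ih : i < size h by rewrite sh -szR.
have [e1 _] := pl i ih.
have st1 : stratD (take i h) = [set p].
  rewrite /stratD size_takel; last exact: ltnW.
  by rewrite (drop_nth p iR) nth_index.
set r := nth (set0, set0) h i.
have rin : r \in h by apply: mem_nth.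
have L1 := c1 r rin; have L2 := c2 r rin.
rewrite /r e1 st1 in L1 L2.
have hin : (v, u, t) \in r.2.
  apply: (round_lemma dp v1 L1) => //=; lia.
move: L2 => [I2 [_ [ok2 _]]].
by have [] := ok2 _ _ _ hin.
Qed.

Theorem mainTheorem14 (V : finType) (Tmax delta k : nat) :
  0 < delta -> 0 < k ->
  exists (st : history V Tmax -> seeds V Tmax) (guess : history V Tmax -> tgraph V Tmax),
    (forall h, #|st h| <= k) /\
    forall h : history V Tmax,
      size h = #|V| * Tmax -> play_of delta st h ->
      forall g : tgraph V Tmax, consistent delta g h -> g = guess h.
Proof.
move=> dp kp.
exists (@stratD V Tmax).
exists (fun h => epsilon (inhabits ([ffun _ => None] : tgraph V Tmax))
                         (fun g => consistent delta g h)).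
split.
  by move=> h; rewrite /stratD; case: (ohead _) => [p|]; rewrite ?cards1 ?cards0.
move=> h sh pl g cg.
set g' := epsilon _ _.
have cg' : consistent delta g' h by rewrite /g'; apply: (epsilon_spec (inhabits ([ffun _ => None] : tgraph V Tmax)) (fun g => consistent delta g h)); exists g.
apply/ffunP => -[v u].
have T1 := @transfer _ _ _ _ _ _ dp sh pl cg cg' v u.
have T2 := @transfer _ _ _ _ _ _ dp sh pl cg' cg v u.
case e1: (g (v, u)) => [t|].
  by rewrite (T1 t e1).
case e2: (g' (v, u)) => [t|] //.
by rewrite (T2 t e2) in e1.
Qed.
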